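(* Let $t=2k-1$ be odd. With $L^{(t)}_0(x)=1$ and $L^{(t)}_m(x)=0$ for $m<0$, for all $n\ge0$, \[ L^{(t)}_{n+1}(x)=x\,L^{(t)}_n(x)-(k!)^2\Big(\binom{n}{k-1}^2+2\binom{n}{k}\binom{n}{k-1}\Big)L^{(t)}_{n-(k-1)}(x)-\Big(\binom{n}{t}\binom{t}{k}(k!)^2\Big)^2L^{(t)}_{n-t}(x). \]
   Context: Let $t\ge1$ be odd and $k=(t+1)/2$. In the complete bipartite graph $K_{n,n}$ (two parts of $n$ vertices each), a $t$-path is a subgraph isomorphic to a path with $t$ edges; it has exactly $k$ vertices in each part. Let $M_t(K_{n,n})=\sum_F(-1)^{|F|}x^{\,2n-(t+1)|F|}$, the sum over all families $F$ of pairwise vertex-disjoint $t$-paths in $K_{n,n}$. The Laguerre polynomial of order $t$ is the polynomial $L^{(t)}_n$ defined by $L^{(t)}_n(x^2)=M_t(K_{n,n})$ (which exists since every exponent is even). *)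

(* Defs.v *)
From HB Require Import structures.
From mathcomp Require Import all_boot all_order all_algebra.
Set Implicit Arguments. Unset Strict Implicit. Unset Printing Implicit Defensive.
Import Order.TTheory GRing.Theory Num.Theory.
Local Open Scope ring_scope.

(* Vertices of K_{n,n}: inl i (left part), inr j (right part). *)
Definition vert (n : nat) : finType := ('I_n + 'I_n)%type.

(* Edges of K_{n,n}: the pair (i, j) is the edge {inl i, inr j}. *)
Definition edge (n : nat) : finType := ('I_n * 'I_n)%type.

Definition edge_verts n (e : edge n) : {set vert n} :=
  [set (inl e.1 : vert n); inr e.2].

Definition verts n (E : {set edge n}) : {set vert n} :=
  \bigcup_(e in E) edge_verts e.

Definition is_tpath (t n : nat) (E : {set edge n}) : bool :=
  [exists s : (t.+1).-tuple (vert n),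
    [&& uniq s,
        all (fun p => [exists e : edge n, edge_verts e == [set p.1; p.2]])
            (zip s (behead s))
      & E == [set e : edge n |
               has (fun p => edge_verts e == [set p.1; p.2]) (zip s (behead s))]]].

Definition tpath_family (t n : nat) (F : {set {set edge n}}) : bool :=
  [forall E in F, is_tpath t E] &&
  [forall E1 in F, forall E2 in F,
      (E1 != E2) ==> [disjoint verts E1 & verts E2]].

Definition Mt (t n : nat) : {poly int} :=
  \sum_(F : {set {set edge n}} | tpath_family t F)
     (-1) ^+ #|F| *: 'X^(2 * n - t.+1 * #|F|).

(* Laguerre polynomial of order t: L with L(x^2) = M_t(K_{n,n}),
   i.e. the polynomial whose i-th coefficient is the 2i-th coefficient of M_t. *)
Definition Lag (t n : nat) : {poly int} :=
  \poly_(i < n.+1) (Mt t n)`_(2 * i).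

Definition Lagz (t : nat) (m : int) : {poly int} :=
  match m with
  | Posz m' => Lag t m'
  | Negz _ => 0
  end.

(* Main.v *)
Require Import Defs.
From HB Require Import structures.
From mathcomp Require Import all_boot all_order all_algebra.
Import Order.TTheory GRing.Theory Num.Theory.
From Stdlib Require Import Lia ArithRing.

Set Implicit Arguments. Unset Strict Implicit. Unset Printing Implicit Defensive.

Lemma memzip (T : eqType) (x0 : T) (s : seq T) p :
  p \in zip s (behead s) <-> exists2 m, m.+1 < size s & p = (nth x0 s m, nth x0 s m.+1).
Proof.
elim: s => [|x [|y s] IH] /=.
- by split => // [[m]].
- by split => // [[m]].
- move: IH => /= IH; rewrite in_cons; split.
  + case/orP => [/eqP->|]; first by exists 0.
    by move=> /IH [m hm ->]; exists m.+1.
  + move=> [[|m] hm hp]; first by rewrite hp eqxx.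
    by apply/orP; right; apply/IH; exists m.
Qed.

Section K.
Variable n : nat.

Lemma ev_eq (e : edge n) (u v : vert n) :
  (edge_verts e == [set u; v]) =
  ((u == inl e.1) && (v == inr e.2)) || ((u == inr e.2) && (v == inl e.1)).
Proof.
apply/idP/idP.
- move/eqP => h.
  have hu : u \in edge_verts e by rewrite h set21.
  have hv : v \in edge_verts e by rewrite h set22.
  have h1 : inl e.1 \in [set u; v] by rewrite -h set21.
  have h2 : inr e.2 \in [set u; v] by rewrite -h set22.
  move: hu hv h1 h2; rewrite /edge_verts !inE.
  by case/orP=>/eqP->; case/orP=>/eqP->; rewrite ?eqxx.
- by case/orP=> /andP[/eqP-> /eqP->]; rewrite /edge_verts // setUC.
Qed.

End K.

Ltac nlia :=
  repeat match goal with
  | H : is_true (leq _ _) |- _ => move/ssrnat.leP: H => H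
  end;
  try apply/ssrnat.leP;
  repeat match goal with
  | H : context [addn _ _] |- _ => rewrite -plusE in H
  | H : context [subn _ _] |- _ => rewrite -minusE in H
  | H : context [muln _ _] |- _ => rewrite -multE in H
  | H : context [double _] |- _ => rewrite -addnn in H
  end;
  rewrite -?addnn -?plusE -?minusE -?multE; lia.

Section Seqs.
Variable n : nat.
Variable x0 : vert n.

Definition lv (v : vert n) : bool := if v is inl _ then true else false.
Definition getv (v : vert n) : 'I_n := match v with inl x => x | inr y => y end.

Definition Eset (s : seq (vert n)) : {set edge n} :=
  [set e : edge n | has (fun q => edge_verts e == [set q.1; q.2]) (zip s (behead s))].

Definition adjb (u v : vert n) := [exists e : edge n, edge_verts e == [set u; v]].

Definition AdjOK (s : seq (vert n)) :=
  forall m, m.+1 < size s -> adjb (nth x0 s m) (nth x0 s m.+1).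

Definition cons2 (s : seq (vert n)) (u v : vert n) :=
  exists2 m, m.+1 < size s & [set u; v] = [set nth x0 s m; nth x0 s m.+1].

Lemma pair_eq (u v x y : vert n) :
  [set u; v] = [set x; y] -> (u = x /\ v = y) \/ (u = y /\ v = x).
Proof.
move=> h.
have hu : u \in [set x; y] by rewrite -h set21.
have hv : v \in [set x; y] by rewrite -h set22.
have hx : x \in [set u; v] by rewrite h set21.
have hy : y \in [set u; v] by rewrite h set22.
move: hu hv hx hy; rewrite !inE.
case/orP=>/eqP->; case/orP=>/eqP->; move=> hx hy; move: hx hy;
  do 2! (case/orP => /eqP ?); subst; by [left|right].
Qed.

Lemma adjb_lv u v : adjb u v -> lv u != lv v.
Proof. by case/existsP => e; rewrite ev_eq; case/orP=> /andP[/eqP-> /eqP->]. Qed.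

Lemma lv_adjb u v : lv u != lv v -> adjb u v.
Proof.
case: u => [x|x]; case: v => [y|y] //= _; apply/existsP.
- by exists (x, y); rewrite ev_eq !eqxx.
- by exists (y, x); rewrite ev_eq !eqxx orbT.
Qed.

Lemma in_Eset s e :
  e \in Eset s <-> exists2 m, m.+1 < size s & edge_verts e = [set nth x0 s m; nth x0 s m.+1].
Proof.
rewrite inE; split.
- case/hasP => q /(memzip x0) [m hm ->] /= /eqP h; by exists m.
- move=> [m hm h]; apply/hasP; exists (nth x0 s m, nth x0 s m.+1); last by rewrite h.
  by apply/(memzip x0); exists m.
Qed.

Lemma cons2_trans s s' u v : Eset s = Eset s' -> AdjOK s -> cons2 s u v -> cons2 s' u v.
Proof.
move=> hE ha [m hm huv].
have /existsP [e /eqP he] := ha m hm.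
have : e \in Eset s by apply/in_Eset; exists m.
rewrite hE => /in_Eset [m' hm' he'].
by exists m' => //; rewrite huv -he -he'.
Qed.


Lemma nthinj s i j : uniq s -> i < size s -> j < size s ->
  nth x0 s i = nth x0 s j -> i = j.
Proof. by move=> hu hi hj /eqP; rewrite nth_uniq // => /eqP. Qed.

Lemma parity s : AdjOK s -> forall m, m < size s ->
  lv (nth x0 s m) = lv (nth x0 s 0) (+) odd m.
Proof.
move=> ha; elim=> [|m IH] hm /=; first by rewrite addbF.
have := adjb_lv (ha m hm); rewrite IH ?(ltnW hm) //.
by case: (lv (nth x0 s m.+1)); case: (lv (nth x0 s 0)); case: (odd m).
Qed.

Lemma seq_unique s s' : size s = size s' -> uniq s -> uniq s' ->
  Eset s = Eset s' -> AdjOK s -> AdjOK s' -> 1 < size s ->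
  lv (nth x0 s 0) -> lv (nth x0 s' 0) -> ~~ odd (size s) -> s = s'.
Proof.
move=> hsz hu hu' hE ha ha' h1 hl hl' hev.
have hE' := esym hE.
have i0 : forall i, i.+1 < size s' -> nth x0 s' 0 = nth x0 s' i.+1 -> False.
  move=> i hi e; have h0s : 0 < size s' by rewrite -hsz (leq_ltn_trans (leq0n _) h1).
  by have := nthinj hu' h0s hi e.
have h0 : nth x0 s' 0 = nth x0 s 0.
  have c : cons2 s' (nth x0 s' 0) (nth x0 s' 1) by exists 0; rewrite // -hsz.
  have [q hq hsq] : exists2 q, q < size s & nth x0 s' 0 = nth x0 s q.
    have [m hm /pair_eq [[-> _]|[-> _]]] := cons2_trans hE' ha' c.
    + by exists m => //; apply: ltnW.
    + by exists m.+1.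
  case: q hq hsq => [|r] hr hsr; first by [].
  have [hr2|hrl] := ltnP r.+2 (size s); last first.
    have er : r.+1 = (size s).-1 by apply/eqP; rewrite eqn_leq -ltnS (ltn_predK h1) hr -ltnS (ltn_predK h1).
    have := parity ha hr; rewrite -hsr hl' hl er.
    by move: hev; case: (size s) h1 => [|[|L]] //= _; rewrite negbK => ->.
  have c1 : cons2 s (nth x0 s r) (nth x0 s r.+1) by exists r; [apply: ltnW|].
  have c2 : cons2 s (nth x0 s r.+1) (nth x0 s r.+2) by exists r.+1.
  have [a ha1 /pair_eq [[e1 e2]|[e1 e2]]] := cons2_trans hE ha c1.
    by exfalso; apply: (i0 a); [exact ha1 | rewrite hsr e2].
  have s0 : 0 < size s' by rewrite -hsz (leq_ltn_trans (leq0n _) h1).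
  have a0 : a = 0 by apply: (nthinj hu' (ltnW ha1) s0); rewrite -e2 hsr.
  subst a.
  have [b hb1 /pair_eq [[e3 e4]|[e3 e4]]] := cons2_trans hE ha c2; last first.
    by exfalso; apply: (i0 b); [exact hb1 | rewrite hsr e3].
  have b0 : b = 0 by apply: (nthinj hu' (ltnW hb1) s0); rewrite -e3 hsr.
  subst b.
  have : r.+2 = r by apply: (nthinj hu) => //; [apply: ltnW; apply: ltnW | rewrite e4 e1].
  by move/eqP; rewrite gtn_eqF // (ltn_trans (ltnSn r) (ltnSn r.+1)).
have hall : forall m i, i <= m -> i < size s -> nth x0 s' i = nth x0 s i.
  elim=> [|m IH] i; first by rewrite leqn0 => /eqP ->.
  rewrite leq_eqVlt => /orP [/eqP ->|]; last by apply: IH.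
  move=> hm.
  have c : cons2 s' (nth x0 s' m) (nth x0 s' m.+1) by exists m; rewrite // -hsz.
  have hm' : m < size s := ltnW hm.
  have hIm : nth x0 s' m = nth x0 s m := IH m (leqnn m) hm'.
  have [c' hc /pair_eq [[e1 e2]|[e1 e2]]] := cons2_trans hE' ha' c.
    rewrite hIm in e1; have emc := nthinj hu hm' (ltnW hc) e1.
    by rewrite e2 emc.
  rewrite hIm in e1; have emc := nthinj hu hm' hc e1; subst m.
  have := IH c' (leqnSn _) (ltnW hc); rewrite -e2 => /esym e5.
  have := nthinj hu' _ _ e5; rewrite -hsz => /(_ hm (ltnW (ltnW hm))).
  by move/eqP; rewrite gtn_eqF // (ltn_trans (ltnSn c') (ltnSn c'.+1)).
apply: (@eq_from_nth _ x0) => // i hi; symmetry; exact: (hall i).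
Qed.


Lemma adjb_sym u v : adjb u v = adjb v u.
Proof. by rewrite /adjb; apply: eq_existsb => e; rewrite [[set v; u]]setUC. Qed.

Lemma AdjOK_rev s : AdjOK s -> AdjOK (rev s).
Proof.
move=> ha m; rewrite size_rev => hm.
rewrite !nth_rev ?(ltnW hm) // adjb_sym.
have e : size s - m.+1 = (size s - m.+2).+1 by nlia.
rewrite e; apply: ha; nlia.
Qed.

Lemma Eset_rev s : Eset (rev s) = Eset s.
Proof.
apply/setP => e; apply/idP/idP.
- move/(in_Eset (rev s) e) => [m hm he]; apply/(in_Eset s e); move: hm he.
  rewrite ?size_rev => hm he.
  exists (size s - m.+2); first nlia.
  move: he; rewrite !nth_rev ?(ltnW hm) //.
  have -> : size s - m.+1 = (size s - m.+2).+1 by nlia.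
  by rewrite setUC.
- move/(in_Eset s e) => [m hm he]; apply/(in_Eset (rev s) e).
  rewrite size_rev; exists (size s - m.+2); first nlia.
  rewrite he !nth_rev; try nlia.
  have -> : size s - (size s - m.+2).+1 = m.+1 by nlia.
  have -> : size s - (size s - m.+2).+2 = m by nlia.
  by rewrite setUC.
Qed.

Lemma verts_Eset s : AdjOK s -> 1 < size s -> forall v, (v \in verts (Eset s)) = (v \in s).
Proof.
move=> ha h1 v; apply/idP/idP.
- case/bigcupP => e /in_Eset [m hm ->]; rewrite !inE.
  by case/orP=> /eqP ->; apply: mem_nth => //; apply: ltnW.
- case/(nthP x0) => i hi <-.
  have [hi1|hi1] := ltnP i.+1 (size s).
    have /existsP [e /eqP he] := ha i hi1.
    apply/bigcupP; exists e; first by apply/in_Eset; exists i.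
    by rewrite he set21.
  have ei : i = (i.-1).+1 by nlia.
  have hi2 : (i.-1).+1 < size s by rewrite -ei.
  have /existsP [e /eqP he] := ha _ hi2.
  apply/bigcupP; exists e; first by apply/in_Eset; exists i.-1.
  by rewrite he -ei set22.
Qed.

End Seqs.

Section Paths.
Variables n p : nat.
Local Notation FF := {ffun 'I_p.+1 -> 'I_n}.
Implicit Types a b : FF.

Definition sig (a b : FF) (m : nat) : vert n :=
  if odd m then inr (b (inord m./2)) else inl (a (inord m./2)).
Definition pseq (a b : FF) := mkseq (sig a b) (p.*2.+2).
Definition Pth (a b : FF) := Eset (pseq a b).

Lemma size_pseq a b : size (pseq a b) = p.*2.+2.
Proof. exact: size_mkseq. Qed.

Lemma nth_pseq x0 a b m : m < p.*2.+2 -> nth x0 (pseq a b) m = sig a b m.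
Proof. exact: nth_mkseq. Qed.

Lemma half_lt m : m < p.*2.+2 -> m./2 < p.+1.
Proof. by move=> h; rewrite ltn_half_double doubleS. Qed.

Lemma inordh m : m < p.*2.+2 -> (inord m./2 : 'I_p.+1) = m./2 :> nat.
Proof. by move/half_lt => h; rewrite inordK. Qed.

Lemma lv_sig a b m : lv (sig a b m) = ~~ odd m.
Proof. by rewrite /sig; case: (odd m). Qed.

Lemma uniq_pseq a b : injective a -> injective b -> uniq (pseq a b).
Proof.
move=> ia ib; rewrite /pseq /mkseq map_inj_in_uniq ?iota_uniq //.
move=> m1 m2; rewrite !mem_iota !add0n => /andP[_ h1] /andP[_ h2].
rewrite /sig.
have e : m1./2 = m2./2 -> odd m1 = odd m2 -> m1 = m2.
  by move=> eh eo; rewrite -(odd_double_half m1) -(odd_double_half m2) eh eo.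
case o1: (odd m1); case o2: (odd m2) => // [] [] /= h.
- by apply: e; rewrite ?o1 ?o2 //; have := ib _ _ h => /(congr1 (@nat_of_ord _)); rewrite !inordh.
- by apply: e; rewrite ?o1 ?o2 //; have := ia _ _ h => /(congr1 (@nat_of_ord _)); rewrite !inordh.
Qed.

Lemma adj_pseq x0 a b : AdjOK x0 (pseq a b).
Proof.
move=> m; rewrite size_pseq => hm.
rewrite !nth_pseq ?(ltnW hm) //; apply: lv_adjb; rewrite !lv_sig /=.
by case: (odd m).
Qed.

Lemma is_tpath_Pth a b : injective a -> injective b -> is_tpath p.*2.+1 (Pth a b).
Proof.
move=> ia ib; apply/existsP.
exists (@Tuple _ _ (pseq a b) (introT eqP (size_pseq a b))).
apply/and3P; split; first exact: uniq_pseq.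
- apply/allP => q /(memzip (inl (a ord0))) [m hm ->] /=.
  exact: (adj_pseq (inl (a ord0))).
- by [].
Qed.

Lemma lv_get (v : vert n) : (lv v -> inl (getv v) = v) /\ (~~ lv v -> inr (getv v) = v).
Proof. by case: v. Qed.

Lemma back_left x0 (s : seq (vert n)) : size s = p.*2.+2 -> uniq s -> AdjOK x0 s ->
  lv (nth x0 s 0) -> exists a b : FF, [/\ injective a, injective b & pseq a b = s].
Proof.
move=> hs hu ha hl.
have par : forall m, m < p.*2.+2 -> lv (nth x0 s m) = ~~ odd m.
  by move=> m hm; rewrite (parity ha) ?hs // hl.
have lt2 : forall i : 'I_p.+1, i.*2 < p.*2.+2 by move=> i; rewrite -doubleS ltn_double.
have lt2' : forall i : 'I_p.+1, i.*2.+1 < p.*2.+2 by move=> i; have := ltn_ord i; rewrite -(ltn_Sdouble i p.+1).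
exists [ffun i : 'I_p.+1 => getv (nth x0 s i.*2)].
exists [ffun i : 'I_p.+1 => getv (nth x0 s i.*2.+1)].
split.
- move=> i j; rewrite !ffunE => h.
  have := par _ (lt2 i); have := par _ (lt2 j); rewrite !odd_double /= => hj hi.
  have e : nth x0 s i.*2 = nth x0 s j.*2.
    by rewrite -(proj1 (lv_get _) hi) -(proj1 (lv_get _) hj) h.
  have := nthinj hu _ _ e; rewrite hs => /(_ (lt2 i) (lt2 j)) /double_inj.
  exact: val_inj.
- move=> i j; rewrite !ffunE => h.
  have := par _ (lt2' i); have := par _ (lt2' j); rewrite /= !odd_double /= => hj hi.
  have e : nth x0 s i.*2.+1 = nth x0 s j.*2.+1.
    have ei := proj2 (lv_get (nth x0 s i.*2.+1)); have ej := proj2 (lv_get (nth x0 s j.*2.+1)).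
    by rewrite -ei ?hi // -ej ?hj // h.
  have := nthinj hu _ _ e; rewrite hs => /(_ (lt2' i) (lt2' j)) [] /double_inj.
  exact: val_inj.
- apply: (@eq_from_nth _ x0); first by rewrite size_pseq hs.
  move=> m; rewrite size_pseq => hm; rewrite nth_pseq // /sig.
  have hp := par m hm.
  case o: (odd m); rewrite ffunE inordh //.
  + have -> : (m./2).*2.+1 = m by rewrite -[RHS](odd_double_half m) o.
    by apply: (proj2 (lv_get _)); rewrite hp o.
  + have -> : (m./2).*2 = m by rewrite -[RHS](odd_double_half m) o.
    by apply: (proj1 (lv_get _)); rewrite hp o.
Qed.


Lemma tpath_Pth (E : {set edge n}) : is_tpath p.*2.+1 E ->
  exists a b : FF, [/\ injective a, injective b & E = Pth a b].
Proof.
case/existsP => s /and3P [hu hall /eqP hE].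
set x0 := thead s.
have hs : size s = p.*2.+2 := size_tuple s.
have ha : AdjOK x0 s.
  move=> m hm.
  have hin : (nth x0 s m, nth x0 s m.+1) \in zip s (behead s) by apply/(memzip x0); exists m.
  exact: (allP hall _ hin).
have hEs : E = Eset s by rewrite hE.
case hl: (lv (nth x0 s 0)).
- have [a [b [ia ib hab]]] := back_left hs hu ha hl.
  by exists a, b; split => //; rewrite hEs /Pth hab.
- have hs' : size (rev s) = p.*2.+2 by rewrite size_rev.
  have hl' : lv (nth x0 (rev s) 0).
    rewrite nth_rev ?hs // subn1 /= (parity ha) ?hs // hl /=.
    by rewrite odd_double.
  have hu' : uniq (rev s) by rewrite rev_uniq.
  have [a [b [ia ib hab]]] := back_left hs' hu' (AdjOK_rev ha) hl'.
  by exists a, b; split => //; rewrite hEs /Pth hab Eset_rev.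
Qed.

Lemma lt2 (i : 'I_p.+1) : i.*2 < p.*2.+2.
Proof. by rewrite -doubleS ltn_double. Qed.
Lemma lt2' (i : 'I_p.+1) : i.*2.+1 < p.*2.+2.
Proof. by have := ltn_ord i; rewrite -(ltn_Sdouble i p.+1). Qed.

Lemma sig_even a b (i : 'I_p.+1) : sig a b i.*2 = inl (a i).
Proof. by rewrite /sig odd_double doubleK inord_val. Qed.
Lemma sig_odd a b (i : 'I_p.+1) : sig a b i.*2.+1 = inr (b i).
Proof.
rewrite /sig; have -> : (i.*2.+1)./2 = i := half_bit_double i true.
by rewrite /= odd_double inord_val.
Qed.

Lemma Pth_inj a b a' b' : injective a -> injective b -> injective a' -> injective b' ->
  Pth a b = Pth a' b' -> a = a' /\ b = b'.
Proof.
move=> ia ib ia' ib' hP.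
set x0 : vert n := inl (a ord0).
have e : pseq a b = pseq a' b'.
  apply: (seq_unique (x0 := x0)); rewrite ?size_pseq ?odd_double //.
  all: try exact: uniq_pseq; try exact: adj_pseq; try by rewrite nth_pseq.
  by rewrite /= negbK odd_double.
split; apply/ffunP => i.
- have := congr1 (fun s => nth x0 s i.*2) e; rewrite !nth_pseq ?lt2 // !sig_even.
  by case.
- have := congr1 (fun s => nth x0 s i.*2.+1) e; rewrite !nth_pseq ?lt2' // !sig_odd.
  by case.
Qed.

Lemma mem_pseq a b v :
  (v \in pseq a b) = [exists i, (v == inl (a i)) || (v == inr (b i))].
Proof.
apply/idP/existsP.
- case/(nthP v) => m; rewrite size_pseq => hm; rewrite nth_pseq // /sig => <-.
  exists (inord m./2); by case: (odd m); rewrite eqxx ?orbT.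
- move=> [i /orP [/eqP->|/eqP->]].
  + by rewrite -(sig_even a b) -(nth_pseq v) ?lt2 // mem_nth // size_pseq lt2.
  + by rewrite -(sig_odd a b) -(nth_pseq v) ?lt2' // mem_nth // size_pseq lt2'.
Qed.

Lemma verts_Pth a b v : (v \in verts (Pth a b)) = (v \in pseq a b).
Proof. by rewrite /Pth (verts_Eset (@adj_pseq v a b)) // size_pseq. Qed.

Lemma left_Pth a b : [set x | inl x \in verts (Pth a b)] = [set a i | i : 'I_p.+1].
Proof.
apply/setP => x; rewrite inE verts_Pth mem_pseq.
apply/existsP/imsetP.
- by move=> [i /orP [/eqP [->]|//]]; exists i.
- by move=> [i _ ->]; exists i; rewrite eqxx.
Qed.

Lemma right_Pth a b : [set y | inr y \in verts (Pth a b)] = [set b i | i : 'I_p.+1].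
Proof.
apply/setP => x; rewrite inE verts_Pth mem_pseq.
apply/existsP/imsetP.
- by move=> [i /orP [//|/eqP [->]]]; exists i.
- by move=> [i _ ->]; exists i; rewrite eqxx orbT.
Qed.

End Paths.

Lemma disjP (T : finType) (A B : {set T}) :
  reflect (forall x, x \in A -> x \in B -> False) [disjoint A & B].
Proof.
rewrite -setI_eq0; apply: (iffP eqP) => [h x ha hb|h].
  have : x \in A :&: B by rewrite inE ha hb.
  by rewrite h inE.
apply/setP => x; rewrite !inE; apply/negbTE/negP => /andP [ha hb]; exact: h ha hb.
Qed.

Lemma dcount (T U : finType) (S : {set T}) (r : T -> U -> bool) :
  \sum_(x in S) #|[set y | r x y]| = \sum_y #|[set x in S | r x y]|.
Proof.
have ce : forall (V : finType) (P : pred V), #|[set v | P v]| = \sum_v P v.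
  move=> V P; rewrite -sum1_card big_mkcond /=; apply: eq_bigr => v _.
  by rewrite inE; case: (P v).
rewrite (eq_bigr (fun x => \sum_y r x y)) => [|x _]; last exact: ce.
rewrite exchange_big /=; apply: eq_bigr => y _.
rewrite ce big_mkcond /=; apply: eq_bigr => x _;
by case: (x \in S).
Qed.

Lemma ffactD m a b : m ^_ (a + b) = m ^_ a * (m - a) ^_ b.
Proof.
elim: b => [|b IH]; first by rewrite addn0 ffactn0 muln1.
by rewrite addnS !ffactnSr IH subnDA mulnA.
Qed.

Section Count.
Variables n p : nat.
Local Notation FF := {ffun 'I_p.+1 -> 'I_n}.
Local Notation t := p.*2.+1.

Lemma count_avoid (W : {set vert n}) :
  #|[set P : {set edge n} | is_tpath t P && [disjoint verts P & W]]| =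
  #|[set x | inl x \notin W]| ^_ p.+1 * #|[set y | inr y \notin W]| ^_ p.+1.
Proof.
set Rl := [set x | inl x \notin W]; set Rr := [set y | inr y \notin W].
set D1 := [set f : FF in ffun_on (mem Rl) | injectiveb f].
set D2 := [set f : FF in ffun_on (mem Rr) | injectiveb f].
have c1 : #|D1| = #|Rl| ^_ p.+1 by rewrite card_inj_ffuns_on card_ord.
have c2 : #|D2| = #|Rr| ^_ p.+1 by rewrite card_inj_ffuns_on card_ord.
rewrite -c1 -c2 -cardsX.
set phi := fun ab : FF * FF => Pth ab.1 ab.2.
have e : [set P : {set edge n} | is_tpath t P && [disjoint verts P & W]] = phi @: setX D1 D2.
  apply/setP => P; rewrite inE; apply/andP/imsetP.
  - move=> [/tpath_Pth [a [b [ia ib ->]]] hd].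
    exists (a, b) => //; rewrite !inE /=.
    apply/andP; split; apply/andP; split; try by apply/injectiveP.
    + apply/ffun_onP => i; rewrite inE; apply/negP => hw.
      move/disjP: hd; apply; last exact: hw.
      by rewrite verts_Pth mem_pseq; apply/existsP; exists i; rewrite eqxx.
    + apply/ffun_onP => i; rewrite inE; apply/negP => hw.
      move/disjP: hd; apply; last exact: hw.
      by rewrite verts_Pth mem_pseq; apply/existsP; exists i; rewrite eqxx orbT.
  - move=> [[a b]]; rewrite !inE /= => /andP [/andP [/ffun_onP ha /injectiveP ia] /andP [/ffun_onP hb /injectiveP ib]] ->.
    split; first exact: is_tpath_Pth.
    apply/disjP => v; rewrite /phi /= verts_Pth mem_pseq => /existsP [i /orP [/eqP ->|/eqP ->]].
    + by move: (ha i); rewrite inE => /negP.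
    + by move: (hb i); rewrite inE => /negP.
rewrite e card_in_imset //.
move=> [a b] [a' b']; rewrite !inE /= => /andP [/andP [_ /injectiveP ia] /andP [_ /injectiveP ib]].
move=> /andP [/andP [_ /injectiveP ia'] /andP [_ /injectiveP ib']].
by rewrite /phi /= => /(Pth_inj ia ib ia' ib') [-> ->].
Qed.


Implicit Types (F G : {set {set edge n}}) (P E : {set edge n}).

Definition fam (F : {set {set edge n}}) := tpath_family t F.
Definition VF (F : {set {set edge n}}) := \bigcup_(E in F) verts E.

Lemma famP F : reflect ((forall E, E \in F -> is_tpath t E) /\
   (forall E1 E2, E1 \in F -> E2 \in F -> E1 != E2 -> [disjoint verts E1 & verts E2]))
   (fam F).
Proof.
apply: (iffP andP) => [[/forall_inP h1 /forall_inP h2]|[h1 h2]]; split.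
- exact: h1.
- by move=> E1 E2 i1 i2; move/forall_inP: (h2 E1 i1) => /(_ E2 i2) /implyP.
- by apply/forall_inP.
- apply/forall_inP => E1 i1; apply/forall_inP => E2 i2; apply/implyP; exact: h2.
Qed.

Lemma fam_sub F G : G \subset F -> fam F -> fam G.
Proof.
move=> /subsetP hs /famP [h1 h2]; apply/famP; split.
- by move=> E /hs; apply: h1.
- by move=> E1 E2 /hs i1 /hs i2; apply: h2.
Qed.

Lemma tpath_verts0 P : is_tpath t P -> exists v, v \in verts P.
Proof.
move/tpath_Pth => [a [b [_ _ ->]]]; exists (inl (a ord0)).
by rewrite verts_Pth mem_pseq; apply/existsP; exists ord0; rewrite eqxx.
Qed.

Lemma side_card (f : 'I_n -> vert n) P : (f = inl \/ f = inr) -> is_tpath t P ->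
  #|[set x | f x \in verts P]| = p.+1.
Proof.
move=> hf /tpath_Pth [a [b [ia ib ->]]].
case: hf => ->.
- by rewrite left_Pth card_in_imset ?card_ord // => i j _ _; apply: ia.
- by rewrite right_Pth card_in_imset ?card_ord // => i j _ _; apply: ib.
Qed.

Lemma side_fam (f : 'I_n -> vert n) : (f = inl \/ f = inr) -> forall j F, #|F| = j -> fam F ->
  #|[set x | f x \in VF F]| = p.+1 * j.
Proof.
move=> hf; elim=> [|j IH] F hc hF.
  rewrite (cards0_eq hc) /VF big_set0 muln0.
  by apply: eq_card0 => x; rewrite !inE.
have [E hE] : exists E, E \in F.
  by apply/set0Pn; rewrite -card_gt0 hc.
have hc' : #|F :\ E| = j by move: hc; rewrite (cardsD1 E) hE add1n => [[]].
have hF' : fam (F :\ E) by apply: fam_sub hF; apply: subsetDl.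
have [h1 h2] := famP _ hF.
rewrite /VF (big_setD1 _ hE) /=.
have -> : [set x | f x \in verts E :|: \bigcup_(E0 in F :\ E) verts E0] =
   [set x | f x \in verts E] :|: [set x | f x \in VF (F :\ E)].
  by apply/setP => x; rewrite !inE.
rewrite cardsU (side_card hf (h1 _ hE)) (IH _ hc' hF').
have -> : [set x | f x \in verts E] :&: [set x | f x \in VF (F :\ E)] = set0.
  apply/setP => x; rewrite !inE; apply/negbTE/negP => /andP [hx /bigcupP [E' hE' hx']].
  move: hE'; rewrite !inE => /andP [hne hE'].
  have hne' : E != E' by rewrite eq_sym.
  by move/disjP: (h2 _ _ hE hE' hne') => /(_ _ hx hx').
by rewrite cards0 subn0 mulnS.
Qed.

Lemma fam_bound F : fam F -> p.+1 * #|F| <= n.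
Proof.
move=> hF; rewrite -(side_fam (or_introl erefl) (erefl _) hF).
by rewrite -[X in _ <= X]card_ord max_card.
Qed.


Definition N j := #|[set F | fam F && (#|F| == j)]|.

Lemma Nstep j : j.+1 * N j.+1 = N j * ((n - p.+1 * j) ^_ p.+1) ^ 2.
Proof.
set S1 := [set F | fam F && (#|F| == j.+1)].
set S0 := [set F | fam F && (#|F| == j)].
have L : j.+1 * N j.+1 = \sum_(F in S1) #|[set P | P \in F]|.
  rewrite /N -/S1 mulnC -sum_nat_const; apply: eq_bigr => F; rewrite inE => /andP [_ /eqP hc].
  by rewrite -hc; apply: eq_card => P; rewrite inE.
have R : N j * ((n - p.+1 * j) ^_ p.+1) ^ 2 =
    \sum_(G in S0) #|[set P | is_tpath t P && [disjoint verts P & VF G]]|.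
  rewrite /N -/S0 -sum_nat_const; apply: eq_bigr => G; rewrite inE => /andP [hG /eqP hc].
  rewrite count_avoid.
  have hl := side_fam (or_introl erefl) hc hG.
  have hr := side_fam (or_intror erefl) hc hG.
  have cc : forall (A : {set 'I_n}), #|~: A| = n - #|A|.
    by move=> A; have h := cardsC A; rewrite card_ord in h; rewrite -(addKn #|A| #|~: A|) h.
  have -> : [set x | inl x \notin VF G] = ~: [set x | inl x \in VF G].
    by apply/setP => x; rewrite !inE.
  have -> : [set x | inr x \notin VF G] = ~: [set x | inr x \in VF G].
    by apply/setP => x; rewrite !inE.
  by rewrite !cc hl hr mulnn.
rewrite L R !dcount; apply: eq_bigr => P _.
set T2 := [set G in S0 | is_tpath t P && [disjoint verts P & VF G]].
have hPG : forall G, G \in T2 -> P \notin G.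
  move=> G; rewrite !inE => /andP [_ /andP [hP hd]]; apply/negP => hPG.
  have [v hv] := tpath_verts0 hP.
  move/disjP: hd => /(_ v hv); apply.
  by apply/bigcupP; exists P.
have e : [set F in S1 | P \in F] = (fun G => P |: G) @: T2.
  apply/setP => F; apply/idP/imsetP.
  - rewrite !inE => /andP [/andP [hF /eqP hc] hPF].
    have [h1 h2] := famP _ hF.
    exists (F :\ P); last by rewrite setD1K.
    rewrite !inE; apply/andP; split; apply/andP; split.
    + by apply: fam_sub hF; apply: subsetDl.
    + by move: hc; rewrite (cardsD1 P) hPF add1n => [[->]].
    + exact: h1.
    + apply: bigcup_disjoint => E; rewrite !inE => /andP [hne hE].
      by apply: h2 => //; rewrite eq_sym.
  - move=> [G hG ->]; have hn := hPG G hG.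
    move: hG; rewrite !inE => /andP [/andP [hG /eqP hc] /andP [hP hd]].
    rewrite eqxx cardsU1 hn hc eqxx !andbT.
    have [g1 g2] := famP _ hG.
    have dd : forall E, E \in G -> [disjoint verts P & verts E].
      by move=> E hE; apply: disjointWr hd; apply: bigcup_sup.
    apply/famP; split.
    + by move=> E; rewrite in_setU1 => /orP [/eqP->|]; [done | apply: g1].
    + move=> E1 E2; rewrite !in_setU1 => /orP [/eqP->|i1] /orP [/eqP->|i2] hne.
      * by rewrite eqxx in hne.
      * exact: dd.
      * by rewrite disjoint_sym; apply: dd.
      * exact: g2.
rewrite e card_in_imset // => G1 G2 h1 h2 /= eG.
by rewrite -(setU1K (hPG _ h1)) -(setU1K (hPG _ h2)) eG.
Qed.

Lemma N0 : N 0 = 1.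
Proof.
rewrite /N -(cards1 (set0 : {set {set edge n}})); apply: eq_card => F.
rewrite !inE cards_eq0; apply/andP/eqP => [[_ /eqP //]|->]; split => //.
by apply/famP; split => E; rewrite inE.
Qed.

Lemma Nfact j : j`! * N j = (n ^_ (p.+1 * j)) ^ 2.
Proof.
elim: j => [|j IH]; first by rewrite N0 muln0.
rewrite factS -mulnA mulnCA Nstep mulnA IH mulnS addnC ffactD -expnMn.
done.
Qed.

End Count.

Section Coef.
Variable p : nat.

Lemma e_eq n (F : {set {set edge n}}) i : fam p F -> i <= n ->
  (2 * i == 2 * n - p.*2.+2 * #|F|) = (p.+1 * #|F| + i == n).
Proof.
move=> hF hi.
have hx := fam_bound hF.
have -> : p.*2.+2 * #|F| = 2 * (p.+1 * #|F|) by rewrite -doubleS -mul2n mulnA.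
move: hx; set x := p.+1 * #|F| => hx.
by apply/eqP/eqP => h; nlia.
Qed.

Local Open Scope ring_scope.

Definition cf (n i : nat) : int :=
  if (i <= n)%N && (p.+1 %| n - i)%N then
    (-1) ^+ ((n - i) %/ p.+1)%N * (N n p ((n - i) %/ p.+1)%N)%:R else 0.

Lemma coef_Lag n i : (Lag p.*2.+1 n)`_i = cf n i.
Proof.
rewrite /Lag coef_poly ltnS /cf.
case hi: (i <= n)%N => //=.
rewrite /Mt coef_sum.
rewrite (eq_bigr (fun F : {set {set edge n}} => if (p.+1 * #|F| + i == n)%N then (-1) ^+ #|F| else 0)); last first.
  move=> F hF; rewrite coefZ coefXn (e_eq hF hi).
  by case: (_ == n)%N; rewrite ?mulr1 ?mulr0.
rewrite -big_mkcondr /=.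
case hd: (p.+1 %| n - i)%N.
- set j0 := ((n - i) %/ p.+1)%N.
  rewrite (eq_bigl (fun F : {set {set edge n}} => F \in [set F | fam p F && (#|F| == j0)])); last first.
    move=> F; rewrite inE /fam; case: (tpath_family _ F) => //=.
    apply/eqP/eqP => h.
    + have e : (n - i = p.+1 * #|F|)%N by rewrite -[in LHS]h addnK.
      by rewrite /j0 e mulKn.
    + by rewrite h /j0 mulnC divnK // subnK.
  rewrite (eq_bigr (fun _ => (-1) ^+ j0)); last by move=> F; rewrite inE => /andP [_ /eqP ->].
  by rewrite sumr_const /N mulr_natr.
- rewrite big_pred0 // => F; apply/negbTE/negP => /andP [_ /eqP h].
  have e : (n - i = p.+1 * #|F|)%N by rewrite -[in LHS]h addnK.
  by move: hd; rewrite e dvdn_mulr.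
Qed.

End Coef.

Ltac nring := rewrite -?mulnn -?plusE -?multE;
  match goal with |- @eq _ ?a ?b => change (@eq nat a b) end; ring.

Section Rec.
Variable p : nat.
Local Notation k := p.+1.
Local Notation t := p.*2.+1.

Definition A n := (k`! ^ 2 * ('C(n, k.-1) ^ 2 + 2 * 'C(n, k) * 'C(n, k.-1)))%N.
Definition B n := (('C(n, t) * 'C(t, k) * k`! ^ 2) ^ 2)%N.

Lemma A_eq n : A n = (n ^_ p) ^ 2 * (k ^ 2 + 2 * k * (n - p)).
Proof.
rewrite /A /=.
have e1 : 'C(n, p) * p`! = n ^_ p := bin_ffact n p.
have e2 : 'C(n, k) * (k * p`!) = n ^_ p * (n - p) by rewrite -factS bin_ffact ffactnSr.
rewrite factS -e1.
transitivity ((k * p`! * 'C(n, p)) ^ 2 + 2 * (k * p`! * 'C(n, p)) * ('C(n, k) * (k * p`!))); first by nring.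
by rewrite e2 -e1; nring.
Qed.

Lemma B_eq n : B n = k ^ 2 * (n ^_ t) ^ 2.
Proof.
rewrite /B.
have e1 : 'C(t, k) * (k`! * p`!) = t`!.
  have hk : k <= t by rewrite ltnS -addnn leq_addl.
  have ht : t - k = p by rewrite subSS -addnn addnK.
  by have := bin_fact hk; rewrite ht.
have e2 : 'C(n, t) * t`! = n ^_ t := bin_ffact n t.
rewrite -e2 -e1 factS.
nring.
Qed.


Lemma core n j1 : k * j1 + p <= n ->
  n.+1 ^ 2 + k ^ 2 * (j1.+1 * j1) = (n - (k * j1 + p)) ^ 2 + (k ^ 2 + 2 * k * (n - p)) * j1.+1.
Proof.
move=> h; have [r ->] : exists r, n = k * j1 + p + r by exists (n - (k * j1 + p)); rewrite subnKC.
have e1 : k * j1 + p + r - (k * j1 + p) = r by rewrite addKn.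
have e2 : k * j1 + p + r - p = k * j1 + r by rewrite -addnA (addnC p) addnA addnK.
rewrite e1 e2; nring.
Qed.

Definition G1 n j := if j is j1.+1 then N (n - p) p j1 else 0.
Definition G2 n j := if j is j2.+2 then N (n - t) p j2 else 0.

Lemma key n j : N n.+1 p j + B n * G2 n j = N n p j + A n * G1 n j.
Proof.
case: j => [|j1]; first by rewrite /= !N0 !muln0.
apply/eqP; rewrite -(eqn_pmul2l (fact_gt0 j1.+1)) !mulnDr !Nfact; apply/eqP.
have hG1 : j1.+1`! * (A n * G1 n j1.+1) = A n * (j1.+1 * ((n - p) ^_ (k * j1)) ^ 2).
  by rewrite /= mulnCA factS -mulnA Nfact.
have hG2 : j1.+1`! * (B n * G2 n j1.+1) = k ^ 2 * (j1.+1 * j1) * (n ^_ (k * j1 + p)) ^ 2.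
  case: j1 hG1 => [|j2] _; first by rewrite /= !muln0.
  rewrite B_eq /G2 !factS.
  transitivity (k ^ 2 * (n ^_ t) ^ 2 * (j2.+2 * j2.+1) * (j2`! * N (n - t) p j2)); first nring.
  have e : k * j2.+1 + p = t + k * j2.
    by rewrite mulnS addnAC addSn addnn.
  rewrite Nfact e ffactD; nring.
set q := k * j1 + p.
set X := n ^_ q.
have eq1 : n.+1 ^_ (k * j1.+1) = n.+1 * X.
  by rewrite /X /q mulnS addnC addnS.
have eq2 : n ^_ (k * j1.+1) = X * (n - q).
  by rewrite /X /q mulnS addnC addnS ffactnSr.
have eq3 : X = n ^_ p * (n - p) ^_ (k * j1) by rewrite /X /q addnC ffactD.
rewrite eq1 eq2 hG1 hG2 A_eq.
rewrite -/q -/X.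
transitivity (X ^ 2 * (n.+1 ^ 2 + k ^ 2 * (j1.+1 * j1))); first by nring.
transitivity (X ^ 2 * ((n - q) ^ 2 + (k ^ 2 + 2 * k * (n - p)) * j1.+1)); last by rewrite eq3; nring.
have [hq|hq] := leqP q n; first by rewrite core.
by rewrite /X ffact_small.
Qed.

End Rec.

Section Fin.
Variable p : nat.
Local Notation k := p.+1.
Local Notation t := p.*2.+1.
Local Open Scope ring_scope.

Lemma Lagz_sub (m q : nat) : Lagz t (m%:Z - q%:Z) = if (q <= m)%N then Lag t (m - q) else 0.
Proof.
case: leqP => h; first by rewrite subzn.
have e : m%:Z - q%:Z = Negz (q - m).-1.
  rewrite NegzE prednK ?subn_gt0 //.
  by rewrite -opprB subzn // ltnW.
by rewrite e.
Qed.

Lemma cf_eval (m i j : nat) : (k * j + i = m)%N -> cf p m i = (-1) ^+ j * (N m p j)%:R.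
Proof.
move=> h; rewrite /cf.
have hi : (i <= m)%N by rewrite -h leq_addl.
have e : (m - i = k * j)%N by rewrite -h addnK.
by rewrite hi e dvdn_mulr //= mulKn.
Qed.

Lemma cf_gt (m i : nat) : (m < i)%N -> cf p m i = 0.
Proof. by rewrite /cf ltnNge => /negbTE ->. Qed.

Lemma cf_zero (m i : nat) : ~~ ((i <= m)%N && (k %| m - i)%N) -> cf p m i = 0.
Proof. by rewrite /cf => /negbTE ->. Qed.

Lemma N_big (m j : nat) : (m < k * j)%N -> N m p j = 0%N.
Proof.
move=> h; have := Nfact m p j; rewrite ffact_small // => /eqP.
rewrite muln_eq0 => /orP [/eqP hf|/eqP //].
by have := fact_gt0 j; rewrite hf.
Qed.

Lemma A0 n : (n < p)%N -> A p n = 0%N.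
Proof. by move=> h; rewrite A_eq ffact_small. Qed.

Lemma B0 n : (n < t)%N -> B p n = 0%N.
Proof. by move=> h; rewrite B_eq ffact_small // muln0. Qed.


Lemma sgnS j : (-1) ^+ j.+1 = - ((-1) ^+ j) :> int.
Proof. by rewrite exprS mulN1r. Qed.

Lemma coef_rec (n i : nat) :
  cf p n.+1 i = (if (i == 0)%N then 0 else cf p n i.-1)
    - (A p n)%:R * (if (p <= n)%N then cf p (n - p) i else 0)
    - (B p n)%:R * (if (t <= n)%N then cf p (n - t) i else 0).
Proof.
have [hd|hd] := boolP ((i <= n.+1)%N && (k %| n.+1 - i)%N).
- case/andP: hd => hi hdv.
  have [j hj] : exists j, (k * j + i = n.+1)%N.
    by exists ((n.+1 - i) %/ k)%N; rewrite mulnC divnK // subnK.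
  clear hi hdv.
  rewrite (cf_eval hj).
  have T1 : (if (i == 0)%N then 0 else cf p n i.-1) = (-1) ^+ j * (N n p j)%:R.
    case: i hj => [|i'] hj /=.
      by rewrite addn0 in hj; rewrite N_big ?mulr0 // hj.
    by rewrite (cf_eval (j := j)) //; move: hj; rewrite addnS => [[]].
  have T2 : (A p n)%:R * (if (p <= n)%N then cf p (n - p) i else 0)
            = - ((-1) ^+ j * (A p n * G1 p n j)%:R).
    case: (leqP p n) => hpn; last by rewrite A0 // mul0n !mul0r mulr0 oppr0.
    clear T1; case: j hj => [|j1] hj.
      by rewrite cf_gt ?mulr0 /= ?muln0 ?mulr0 ?oppr0 //; move: hj; rewrite muln0 add0n => ->; nlia.
    rewrite (cf_eval (j := j1)); last first.
      move: hj; rewrite mulnS; move: (k * j1) => y hj; nlia.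
    by rewrite /= sgnS mulNr opprK natrM mulrCA.
  have T3 : (B p n)%:R * (if (t <= n)%N then cf p (n - t) i else 0)
            = (-1) ^+ j * (B p n * G2 p n j)%:R.
    case: (leqP t n) => htn; last by rewrite B0 // mul0n !mul0r mulr0.
    clear T1 T2; case: j hj => [|[|j2]] hj.
    + by rewrite cf_gt ?mulr0 /= ?muln0 ?mulr0 //; move: hj; rewrite muln0 add0n => ->; nlia.
    + by rewrite cf_gt ?mulr0 /= ?muln0 ?mulr0 //; move: hj; rewrite muln1 => hj; nlia.
    rewrite (cf_eval (j := j2)); last first.
      move: hj; rewrite !mulnS; move: (k * j2) => y hj; nlia.
    by rewrite /= !sgnS opprK natrM mulrCA.
  rewrite T1 T2 T3 opprK.
  have hk := key p n j.
  have e : (N n.+1 p j)%:R = (N n p j)%:R + (A p n * G1 p n j)%:R - (B p n * G2 p n j)%:R :> int.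
    by rewrite -natrD -hk natrD addrK.
  by rewrite e mulrBr mulrDr.
- rewrite cf_zero //.
  have T1 : (if (i == 0)%N then 0 else cf p n i.-1) = 0.
    case: i hd => [|i'] hd //=.
    by rewrite cf_zero //; move: hd; rewrite subSS ltnS.
  have T2 : (if (p <= n)%N then cf p (n - p) i else 0) = 0.
    case: (leqP p n) => hpn //; rewrite cf_zero //; apply: contra hd => /andP [h1 h2].
    have e : (n.+1 - i = (n - p - i) + k)%N by nlia.
    by rewrite e (dvdn_addl _ (dvdnn k)) h2 andbT; nlia.
  have T3 : (if (t <= n)%N then cf p (n - t) i else 0) = 0.
    case: (leqP t n) => htn //; rewrite cf_zero //; apply: contra hd => /andP [h1 h2].
    have e : (n.+1 - i = (n - t - i) + k * 2)%N by rewrite -addnn; nlia.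
    by rewrite e (dvdn_addl _ (dvdn_mulr _ (dvdnn k))) h2 andbT; nlia.
  by rewrite T1 T2 T3 !mulr0 !subr0.
Qed.

End Fin.

Unset Implicit Arguments. Set Strict Implicit.
Local Open Scope ring_scope.

Lemma coef_natmul_if (c : nat) (b : bool) (P : {poly int}) i :
  (c%:R * (if b then P else 0))`_i = c%:R * (if b then P`_i else 0).
Proof. by case: b; rewrite ?mulr0 ?coef0 // mulr_natl coefMn mulr_natl. Qed.

Theorem mainTheorem15 (t k n : nat) (ht : odd t) (hk : k = (t.+1)./2) :
  Lag t n.+1 =
    'X * Lag t n
    - ((k`! ^ 2 * ('C(n, k.-1) ^ 2 + 2 * 'C(n, k) * 'C(n, k.-1)))%N)%:R
        * Lagz t (n%:Z - (k.-1)%:Z)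
    - (('C(n, t) * 'C(t, k) * k`! ^ 2) ^ 2)%N%:R
        * Lagz t (n%:Z - t%:Z).
Proof.
have [p ep] : exists p, t = p.*2.+1.
  exists t./2; have e := odd_double_half t; rewrite ht add1n in e.
  by rewrite -{1}e.
subst t.
have ek : k = p.+1 by rewrite hk -[p.*2.+2]/(p.+1.*2) doubleK.
clear hk; subst k.
have eA : (p.+1`! ^ 2 * ('C(n, p.+1.-1) ^ 2 + 2 * 'C(n, p.+1) * 'C(n, p.+1.-1)))%N = A p n by [].
have eB : (('C(n, p.*2.+1) * 'C(p.*2.+1, p.+1) * p.+1`! ^ 2) ^ 2)%N = B p n by [].
rewrite eA eB !Lagz_sub /=.
apply/polyP => i.
rewrite !coefB coefXM !coef_natmul_if !coef_Lag.
exact: coef_rec.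
Qed.
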